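(* For every $a>0$ there is a constant $C$ such that $|v(x)|\le C(1+|x|^{p-a})$ for all $x\notin K$.
   Context: Let $d\ge2$, $\Sigma$ an open connected subset of $\mathbb S^{d-1}$ regular for the Laplace–Beltrami operator $L$, $K=\{t\theta:t>0,\theta\in\Sigma\}$. $\lambda_1>0$ and $m_1>0$ are the principal Dirichlet eigenvalue and eigenfunction ($Lm_1=-\lambda_1m_1$ in $\Sigma$, $m_1=0$ on $\partial\Sigma$), $p=\sqrt{\lambda_1+(d/2-1)^2}-(d/2-1)$, $u(x)=|x|^pm_1(x/|x|)$. Assume $m_1$ extends, as a solution of $Lm_1=-\lambda_1m_1$, to an open connected $\widetilde\Sigma\supset\Sigma$ with ${\rm dist}(\partial\Sigma,\partial\widetilde\Sigma)>0$, so that $u$ (same formula) is harmonic on the cone $\widetilde K$ generated by $\widetilde\Sigma$. For $\eta>0$ let $K^\eta=\{y:|y-x|<\eta|x|\text{ for some }x\in K\}$, with $\eta$ fixed so that $K\subset K^{4\eta}\subset\widetilde K$. For $a>0$ let $G=K^\eta\cap(K\cup\{x\notin K:{\rm dist}(x,\partial K)\le|x|^{1-a}\})$ and $v(x)=u(x)$ for $x\in G$, $v(x)=|x|^{p-a}$ for $x\notin G$. *)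

(* Defs.v *)
From HB Require Import structures.
From mathcomp Require Import all_boot all_order all_algebra.
From mathcomp Require Import all_classical all_reals all_analysis.
Set Implicit Arguments. Unset Strict Implicit. Unset Printing Implicit Defensive.
Import Order.TTheory GRing.Theory Num.Theory.
Import numFieldNormedType.Exports.
Local Open Scope classical_set_scope.
Local Open Scope ring_scope.

Section Defs.
Variables (R : realType) (d : nat).
Local Notation V := 'rV[R]_d.

Definition enorm (x : V) : R := Num.sqrt (\sum_(i < d) (x ord0 i) ^+ 2).

Definition sphere : set V := [set x | enorm x = 1].

Definition sphere_open (S : set V) : Prop :=
  S `<=` sphere /\ exists O : set V, open O /\ S = O `&` sphere.

(* boundary of an open subset S of the sphere, relative to the sphere
   (the sphere is closed, so this is closure S minus S) *)
Definition sbd (S : set V) : set V := closure S `\` S.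

Definition bd (A : set V) : set V := closure A `\` interior A.

Definition dist_set (x : V) (A : set V) : R := inf [set enorm (x - y) | y in A].

Definition ebasis (i : 'I_d) : V := delta_mx ord0 i.

Definition hom0 (f : V -> R) : V -> R := fun x => f ((enorm x)^-1 *: x).

Definition laplacian (g : V -> R) (x : V) : R :=
  \sum_(i < d) 'D_(ebasis i) ('D_(ebasis i) g) x.

Definition C2_near (g : V -> R) (x : V) : Prop :=
  \forall y \near x, differentiable g y /\
                     forall v : V, differentiable ('D_v g) y.

(* Laplace-Beltrami operator of the sphere: the Laplacian of the
   0-homogeneous extension, evaluated on the sphere *)
Definition LB (f : V -> R) (th : V) : R := laplacian (hom0 f) th.

Definition eig_solution (U : set V) (f : V -> R) (lam : R) : Prop :=
  forall th, U th -> C2_near (hom0 f) th /\ LB f th = - lam * f th.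

Definition principal_dirichlet (Sig : set V) (lam1 : R) (m1 : V -> R) : Prop :=
  0 < lam1 /\
      eig_solution Sig m1 lam1 /\
      {within closure Sig, continuous m1} /\
      (forall th, Sig th -> 0 < m1 th) /\
      (forall th, sbd Sig th -> m1 th = 0) /\
      (forall (lam : R) (phi : V -> R), lam < lam1 ->
         eig_solution Sig phi lam ->
         {within closure Sig, continuous phi} ->
         (forall th, sbd Sig th -> phi th = 0) ->
         forall th, Sig th -> phi th = 0).

Definition cone (S : set V) : set V :=
  [set y | exists t : R, exists2 th : V, 0 < t /\ S th & y = t *: th].

Definition Keta (K : set V) (eta : R) : set V :=
  [set y | exists2 x, K x & enorm (y - x) < eta * enorm x].

End Defs.

(* Main.v *)
Require Import Defs.
From HB Require Import structures.
From mathcomp Require Import all_boot all_order all_algebra.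
From mathcomp Require Import all_classical all_reals all_analysis.
From mathcomp Require Import ring lra.
Set Implicit Arguments. Unset Strict Implicit.
Import Order.TTheory GRing.Theory Num.Theory.
Import numFieldNormedType.Exports.
Local Open Scope classical_set_scope.
Local Open Scope ring_scope.

Section EN.
Variables (R : realType) (d : nat).
Local Notation V := 'rV[R]_d.
Local Notation en := (@enorm R d).

Lemma sumsq_ge0 (x : V) : 0 <= \sum_(i < d) (x ord0 i) ^+ 2.
Proof. by apply: sumr_ge0 => i _; exact: sqr_ge0. Qed.

Lemma en_ge0 (x : V) : 0 <= en x.
Proof. exact: sqrtr_ge0. Qed.

Lemma en_sq (x : V) : en x ^+ 2 = \sum_(i < d) (x ord0 i) ^+ 2.
Proof. by rewrite /enorm sqr_sqrtr // sumsq_ge0. Qed.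

Lemma en_coord (x : V) i : `|x ord0 i| <= en x.
Proof.
rewrite -sqrtr_sqr /enorm ler_sqrt ?sumsq_ge0 //.
rewrite (bigD1 i) //= lerDl; apply: sumr_ge0 => j _; exact: sqr_ge0.
Qed.

Lemma enZ (c : R) (x : V) : en (c *: x) = `|c| * en x.
Proof.
rewrite /enorm (eq_bigr (fun i => c ^+ 2 * (x ord0 i) ^+ 2)).
  by rewrite -mulr_sumr sqrtrM ?sqr_ge0 // sqrtr_sqr.
by move=> i _; rewrite mxE exprMn.
Qed.

Lemma enN (x : V) : en (- x) = en x.
Proof. by rewrite -scaleN1r enZ normrN normr1 mul1r. Qed.

Lemma en0 : en 0 = 0.
Proof. by rewrite -(scale0r (0:V)) enZ normr0 mul0r. Qed.

Lemma en_eq0 (x : V) : en x = 0 -> x = 0.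
Proof.
move=> h; apply/rowP => i; rewrite mxE; apply/eqP; rewrite -normr_eq0.
by rewrite eq_le normr_ge0 andbT -h en_coord.
Qed.

Lemma en_gt0 (x : V) : x != 0 -> 0 < en x.
Proof.
move=> nx; rewrite lt_def en_ge0 andbT; apply/eqP => /en_eq0 h.
by rewrite h eqxx in nx.
Qed.

Lemma amgm_t (t a b : R) : 0 < t -> 2 * (a * b) <= t * a ^+ 2 + t^-1 * b ^+ 2.
Proof.
move=> t0.
have e : t * a ^+ 2 + t^-1 * b ^+ 2 - 2 * (a * b) = t^-1 * (t * a - b) ^+ 2.
  by field; rewrite gt_eqF.
rewrite -subr_ge0 e; apply: mulr_ge0; [by rewrite invr_ge0 ltW|exact: sqr_ge0].
Qed.

Lemma cauchy_schwarz (x y : V) :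
  \sum_(i < d) x ord0 i * y ord0 i <= en x * en y.
Proof.
have [x0|xn0] := eqVneq x 0.
  by rewrite x0 en0 mul0r big1 // => i _; rewrite mxE mul0r.
have [y0|yn0] := eqVneq y 0.
  by rewrite y0 en0 mulr0 big1 // => i _; rewrite mxE mulr0.
have ax := en_gt0 xn0; have ay := en_gt0 yn0.
set t := en y / en x.
have t0 : 0 < t by rewrite divr_gt0.
have h : 2 * \sum_(i < d) x ord0 i * y ord0 i <=
     t * \sum_(i < d) (x ord0 i) ^+ 2 + t^-1 * \sum_(i < d) (y ord0 i) ^+ 2.
  rewrite !mulr_sumr -big_split /=; apply: ler_sum => i _; exact: amgm_t.
move: h; rewrite -!en_sq /t invf_div.
have -> : en y / en x * en x ^+ 2 + en x / en y * en y ^+ 2 = 2 * (en x * en y).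
  by field; rewrite !gt_eqF.
by rewrite ler_pM2l.
Qed.

Lemma en_triangle (x y : V) : en (x + y) <= en x + en y.
Proof.
rewrite -(ler_pXn2r (n:=2)) // ?nnegrE ?addr_ge0 ?en_ge0 //.
rewrite en_sq (eq_bigr (fun i => x ord0 i ^+ 2 + y ord0 i ^+ 2 + 2 * (x ord0 i * y ord0 i))).
  rewrite !big_split /= -!en_sq -mulr_sumr.
  have := cauchy_schwarz x y; nra.
by move=> i _; rewrite mxE; ring.
Qed.

Lemma en_sub_le (x y : V) : `|en x - en y| <= en (x - y).
Proof.
rewrite ler_norml; apply/andP; split.
  have h1 := en_triangle (y - x) x; rewrite subrK in h1.
  have h2 : en (y - x) = en (x - y) by rewrite -enN opprB.
  lra.
have := en_triangle (x - y) y; rewrite subrK; lra.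
Qed.

Lemma max_le_en (x : V) : `|x| <= en x.
Proof.
have -> : `|x| = mx_norm x by []. rewrite mx_normrE; apply: bigmax_le => [|ij _]; first exact: en_ge0.
by case: ij => i j /=; rewrite (ord1 i); exact: en_coord.
Qed.

Lemma coord_le_max (x : V) i : `|x ord0 i| <= `|x|.
Proof.
have -> : `|x| = mx_norm x by []. rewrite mx_normrE.
exact: (le_bigmax _ (fun ij : 'I_1 * 'I_d => `|x ij.1 ij.2|) (ord0, i)).
Qed.

Lemma en_le_max (x : V) : en x <= d%:R * `|x|.
Proof.
rewrite -(ler_pXn2r (n:=2)) // ?nnegrE ?mulr_ge0 ?en_ge0 //.
rewrite en_sq; apply: (@le_trans _ _ (\sum_(i < d) `|x| ^+ 2)).
  apply: ler_sum => i _; rewrite -real_normK ?num_real //.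
  by rewrite lerXn2r ?nnegrE // coord_le_max.
rewrite sumr_const card_ord exprMn -[X in X <= _]mulr_natl.
apply: ler_wpM2r; first exact: sqr_ge0.
have : (0 <= d%:R :> R) by [].
case: (d) => [|n] _; first by rewrite expr0n.
by rewrite expr2 ler_peMl // ler1n.
Qed.


Lemma en_cont : continuous en.
Proof.
move=> x.
have FF : Filter (nbhs x) := @nbhs_filter V x.
apply/cvgrPdist_lt => e e0.
have e1 : 0 < e / (d%:R + 1) by rewrite divr_gt0 // ltr_wpDl.
near=> y.
have h : `|x - y| < e / (d%:R + 1).
  by near: y; apply: (cvgr_dist_lt (fun y => y)); [exact: cvg_id|exact: e1].
apply: (le_lt_trans (en_sub_le x y)); apply: (le_lt_trans (en_le_max _)).
apply: (@le_lt_trans _ _ (d%:R * (e / (d%:R + 1)))).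
  by rewrite ler_wpM2l // ltW.
have d0 : 0 <= d%:R :> R by [].
rewrite mulrA ltr_pdivrMr ?ltr_wpDl //; nra.
Unshelve. all: by end_near.
Qed.

Definition nrm (y : V) : V := (en y)^-1 *: y.

Lemma en_nrm (y : V) : y != 0 -> en (nrm y) = 1.
Proof.
move=> y0; rewrite /nrm enZ ger0_norm ?invr_ge0 ?en_ge0 // mulVf //.
by rewrite gt_eqF // en_gt0.
Qed.

Lemma nrm_cont (y : V) : y != 0 -> {for y, continuous nrm}.
Proof.
move=> y0.
have FF : Filter (nbhs y) := @nbhs_filter V y.
apply: (@cvgZ R V V (nbhs y) FF (fun z => (en z)^-1) id); last exact: cvg_id.
by apply: cvgV; [rewrite gt_eqF // en_gt0|exact: en_cont].
Qed.

Lemma hom0Z (f : V -> R) (c : R) (y : V) : 0 < c -> hom0 f (c *: y) = hom0 f y.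
Proof.
move=> c0; rewrite /hom0 enZ gtr0_norm // scalerA.
have [->|y0] := eqVneq y 0; first by rewrite !scaler0.
rewrite invfM mulrAC mulVf ?gt_eqF // mul1r //.
Qed.

Lemma hom0_nrm (f : V -> R) (y : V) : hom0 f y = f (nrm y).
Proof. by []. Qed.

Lemma cone_char (S : set V) (z : V) : S `<=` @sphere R d ->
  cone S z <-> (z != 0 /\ S (nrm z)).
Proof.
move=> Ssp; split.
  move=> [t [th [t0 Sth] ->]].
  have e1 : en th = 1 by exact: (Ssp th Sth).
  have nz : t *: th != 0.
    apply/eqP => h; have := congr1 en h; rewrite enZ en0 e1 mulr1 => /eqP.
    by rewrite normr_eq0 gt_eqF.
  split => //; rewrite /nrm enZ e1 mulr1 gtr0_norm // scalerA mulVf ?gt_eqF //.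
  by rewrite scale1r.
move=> [z0 Sz]; exists (en z), (nrm z); first by split => //; exact: en_gt0.
by rewrite /nrm scalerA mulfV ?scale1r // gt_eqF // en_gt0.
Qed.


Section Transfer.
Variable (f : V -> R) (t : R) (th : V).
Hypothesis t0 : 0 < t.
Hypothesis C2a : differentiable (hom0 f) th.
Hypothesis C2b : forall v : V, differentiable ('D_v (hom0 f)) th.

Let g := hom0 f.
Let s := fun y : V => t^-1 *: y.

Lemma g_s (y : V) : g y = g (s y).
Proof. by rewrite /g /s hom0Z // invr_gt0. Qed.

Lemma s_diff (y : V) : differentiable s y.
Proof.
have -> : s = *:%R t^-1 by [].
exact: ex_diff.
Qed.

Lemma s_th : s (t *: th) = th.
Proof. by rewrite /s scalerA mulVf ?scale1r // gt_eqF. Qed.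

Lemma transfer_diff : differentiable g (t *: th).
Proof.
have -> : g = g \o s by apply: funext => y; exact: g_s.
apply: differentiable_comp; first exact: s_diff.
by rewrite s_th.
Qed.

Lemma transfer_D (v y : V) : 'D_v g y = 'D_(s v) g (s y).
Proof.
rewrite /derive.
suff -> : (fun h : R => h^-1 *: ((g \o shift y) (h *: v) - g y)) =
  (fun h : R => h^-1 *: ((g \o shift (s y)) (h *: s v) - g (s y))) by [].
apply: funext => h /=.
rewrite /shift (g_s (h *: v + y)) (g_s y); congr (_ *: (g _ - _)).
by rewrite /s scalerDr !scalerA mulrC.
Qed.

Lemma transfer_cont (v : V) : {for t *: th, continuous ('D_v g)}.
Proof.
have -> : 'D_v g = 'D_(s v) g \o s by apply: funext => y; exact: transfer_D.
apply: continuous_comp; first exact: scaler_continuous.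
rewrite s_th; apply: differentiable_continuous; exact: C2b.
Qed.

End Transfer.


Lemma D_lin (g : V -> R) (P w : V) : differentiable g P ->
  'D_w g P = \sum_(i < d) w ord0 i * 'D_(ebasis R i) g P.
Proof.
move=> dg; rewrite deriveE // {1}(row_sum_delta w) linear_sum.
apply: eq_bigr => i _; rewrite linearZ /= deriveE //.
Qed.

Lemma D_bound (g : V -> R) (P w : V) (M : 'I_d -> R) : differentiable g P ->
  (forall i, `|'D_(ebasis R i) g P| <= M i) ->
  `|'D_w g P| <= (\sum_(i < d) M i) * en w.
Proof.
move=> dg hM; rewrite D_lin // mulr_suml.
apply: (le_trans (ler_norm_sum _ _ _)); apply: ler_sum => i _.
rewrite normrM mulrC; apply: ler_pM => //; exact: en_coord.
Qed.

Lemma lip_seg (g : V -> R) (A : set V) (M : 'I_d -> R) (z0 z1 : V) :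
  (forall s : R, 0 <= s <= 1 -> A (z0 + s *: (z1 - z0))) ->
  (forall z, A z -> differentiable g z) ->
  (forall z i, A z -> `|'D_(ebasis R i) g z| <= M i) ->
  `|g z1 - g z0| <= (\sum_(i < d) M i) * en (z1 - z0).
Proof.
move=> segA dA bA.
set w := z1 - z0.
pose P := fun s : R => z0 + s *: w.
pose h := fun s : R => g (P s).
have Pcont : forall s, {for s, continuous P}.
  move=> s; apply: cvgD; first exact: cvg_cst.
  by apply: cvgZr_tmp; exact: cvg_id.
have hder : forall s : R, 0 <= s <= 1 -> is_derive s 1 h ('D_w g (P s)).
  move=> s hs.
  have hsA := segA s hs.
  have E : (fun e : R => e^-1 *: ((h \o shift s) (e *: 1) - h s)) =
           (fun e : R => e^-1 *: ((g \o shift (P s)) (e *: w) - g (P s))).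
    apply: funext => e; rewrite /h /P /shift /=.
    by rewrite scalerDl -[e%:A]/(e * 1) mulr1 addrCA.
  have dv : derivable h s 1.
    rewrite /derivable E; exact: (diff_derivable (dA _ hsA)).
  have -> : 'D_w g (P s) = 'D_1 h s by rewrite /derive E.
  exact: derivableP.
have hcont : {within `[0, 1], continuous h}.
  apply: continuous_in_subspaceT => s; rewrite inE /= in_itv /= => hs.
  apply: continuous_comp; first exact: Pcont.
  exact: differentiable_continuous (dA _ (segA _ hs)).
have hder' : forall x : R, x \in `]0, 1[ -> is_derive x 1 h ('D_w g (P x)).
  move=> x; rewrite in_itv /= => /andP[a b]; apply: hder; by rewrite !ltW.
have [c hc eq] := MVT_segment ler01 hder' hcont.
have h1 : h 1 = g z1 by rewrite /h /P scale1r addrC subrK.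
have h0 : h 0 = g z0 by rewrite /h /P scale0r addr0.
rewrite -h1 -h0 eq subr0 mulr1.
have hc' : 0 <= c <= 1 by move: hc; rewrite in_itv.
apply: D_bound; first exact: dA (segA _ hc').
by move=> i; apply: bA; exact: segA.
Qed.


Lemma cont_bound (A : set V) (f : V -> R) : compact A ->
  (forall z, A z -> {for z, continuous f}) ->
  exists M : R, forall z, A z -> `|f z| <= M.
Proof.
move=> cA cf.
have cfA : compact [set f x | x in A].
  apply: continuous_compact => //; apply: continuous_in_subspaceT => z.
  by rewrite inE => /cf.
have := compact_bounded cfA; case=> M0 [_ HM].
exists (M0 + 1) => z Az; apply: (HM (M0 + 1)); first by rewrite ltrDl.
by exists z.
Qed.


Lemma near_en (z : V) (e : R) : 0 < e -> nbhs z [set y | en (z - y) < e].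
Proof.
move=> e0.
have FF : Filter (nbhs z) := @nbhs_filter V z.
have e1 : 0 < e / (d%:R + 1) by rewrite divr_gt0 // ltr_wpDl.
near=> y.
have h : `|z - y| < e / (d%:R + 1).
  by near: y; apply: (cvgr_dist_lt (fun y => y)); [exact: cvg_id|exact: e1].
apply: (le_lt_trans (en_le_max _)).
apply: (@le_lt_trans _ _ (d%:R * (e / (d%:R + 1)))).
  by rewrite ler_wpM2l // ltW.
have d0 : 0 <= d%:R :> R by [].
rewrite mulrA ltr_pdivrMr ?ltr_wpDl //; nra.
Unshelve. all: by end_near.
Qed.

Lemma cone_open (S : set V) : sphere_open S -> open (cone S).
Proof.
move=> [Ssp [Op [oO SE]]]; rewrite openE => z Kz.
have [z0 Sz] := (cone_char z Ssp).1 Kz.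
have Onb : nbhs (nrm z) Op.
  by apply: open_nbhs_nbhs; split => //; rewrite SE in Sz; case: Sz.
have h1 : nbhs z (nrm @^-1` Op) by exact: nrm_cont Onb.
have h2 : nbhs z [set y | en (z - y) < en z] by apply: near_en; exact: en_gt0.
rewrite /interior; apply: filterS (filterI h1 h2) => y [Oy hy].
have y0 : y != 0.
  by apply/eqP => y0; move: hy; rewrite y0 /= subr0 ltxx.
apply/(cone_char y Ssp); split => //; rewrite SE; split => //.
exact: en_nrm.
Qed.

Lemma bd_cone0 (S : set V) (th0 : V) : S `<=` @sphere R d -> S th0 ->
  bd (cone S) 0.
Proof.
move=> Ssp Sth0; split.
  move=> U /nbhs_ballP [e /= e0 hb].
  exists ((e / 2) *: th0); split.
    exists (e / 2), th0 => //; split => //; exact: divr_gt0.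
  apply: hb; rewrite mx_norm_ball /ball_ /=.
  apply: (le_lt_trans (max_le_en _)); rewrite /= ?e0 /=.
  rewrite sub0r enN enZ (Ssp _ Sth0) mulr1 gtr0_norm ?divr_gt0 //; lra.
move=> /nbhs_singleton /(cone_char 0 Ssp) [].
by rewrite eqxx.
Qed.

Lemma bd_nrm (S : set V) (y : V) : sphere_open S -> bd (cone S) y -> y != 0 ->
  sbd S (nrm y).
Proof.
move=> So [cy niy] y0; have Ssp := So.1; split.
  move=> U hU.
  have h1 : nbhs y (nrm @^-1` U) by exact: nrm_cont hU.
  have [k [Kk Uk]] := cy _ h1.
  have [_ Sk] := (cone_char k Ssp).1 Kk.
  by exists (nrm k).
move=> Sy; apply: niy.
have Ky : cone S y by apply/(cone_char y Ssp).
by have := cone_open So; rewrite openE => /(_ _ Ky).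
Qed.

End EN.

Unset Implicit Arguments.

Theorem lemma4 (R : realType) (d : nat) (Sig Sigt : set 'rV[R]_d)
    (lam1 : R) (m1 : 'rV[R]_d -> R) (eta : R) :
  (2 <= d)%N ->
  sphere_open Sig -> connected Sig ->
  principal_dirichlet Sig lam1 m1 ->
  sphere_open Sigt -> connected Sigt -> Sig `<=` Sigt ->
  (exists2 delta : R, 0 < delta &
     forall x y, sbd Sig x -> sbd Sigt y -> delta <= enorm (x - y)) ->
  eig_solution Sigt m1 lam1 ->
  0 < eta ->
  cone Sig `<=` Keta (cone Sig) (4 * eta) ->
  Keta (cone Sig) (4 * eta) `<=` cone Sigt ->
  let p := Num.sqrt (lam1 + (d%:R / 2 - 1) ^+ 2) - (d%:R / 2 - 1) in
  let u := fun x : 'rV[R]_d => enorm x `^ p * m1 ((enorm x)^-1 *: x) in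
  forall a : R, 0 < a ->
  let G := Keta (cone Sig) eta `&`
           (cone Sig `|` [set x | ~ cone Sig x /\
                                  dist_set x (bd (cone Sig)) <= enorm x `^ (1 - a)]) in
  let v := fun x => if `[< G x >] then u x else enorm x `^ (p - a) in
  exists C : R, forall x, ~ cone Sig x -> `|v x| <= C * (1 + enorm x `^ (p - a)).
Proof.
move=> hd So Sconn PD Sto Stconn SS [delta delta0 hdelta] eigt eta0 KK KKt p u a a0 G v.
have Ssp := So.1; have Stsp := Sto.1.
have Cgen : forall (C : R) (x : 'rV[R]_d), 1 <= C ->
    `|enorm x `^ (p - a)| <= C * (1 + enorm x `^ (p - a)).
  move=> C x C1; rewrite ger0_norm ?powR_ge0 //.
  have := powR_ge0 (enorm x) (p - a); nra.
have [[th0 Sth0]|Sig0] := pselect (exists th, Sig th); last first.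
  exists 1 => x Kx; rewrite /v; case: asboolP => [[[k Kk _] _]|_]; last exact: Cgen.
  by exfalso; apply: Sig0; case: Kk => t [th [_ Sth] _]; exists th.
have e1 : enorm th0 = 1 := Ssp _ Sth0.
have Kth0 : cone Sig th0 by exists 1, th0; [split => //; exact: ltr01|rewrite scale1r].
have eta4 : 4 * eta <= 1.
  rewrite leNgt; apply/negP => h.
  have : cone Sigt 0.
    apply: KKt; exists th0 => //.
    by rewrite sub0r enN e1 mulr1.
  by move/(cone_char 0 Stsp) => []; rewrite eqxx.
have lam0 := PD.1.
have p0 : 0 < p.
  rewrite /p; set c := (d%:R / 2 - 1).
  have s0 := sqrtr_ge0 (lam1 + c ^+ 2).
  have s2 : Num.sqrt (lam1 + c ^+ 2) ^+ 2 = lam1 + c ^+ 2.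
    by rewrite sqr_sqrtr // addr_ge0 ?sqr_ge0 // ltW.
  set s := Num.sqrt _ in s0 s2 *; nra.
pose g := hom0 m1.
pose B := [set z : 'rV[R]_d | exists2 k, Sig k & enorm (z - k) < 7 / 2 * eta].
pose A := closure B.
have BA : B `<=` A := @subset_closure _ B.
have Anear : forall z, A z -> exists2 k, Sig k & enorm (z - k) < 4 * eta.
  move=> z Az.
  have [b [[k Sk hk] hb]] := Az _ (@near_en R d z (eta / 2) ltac:(by rewrite divr_gt0)).
  exists k => //.
  have -> : z - k = (z - b) + (b - k) by rewrite addrA subrK.
  apply: (le_lt_trans (en_triangle _ _)); move: hb => /= hb; lra.
have AKt : forall z, A z -> cone Sigt z.
  move=> z /Anear [k Sk hk]; apply: KKt; exists k.
    by exists 1, k; [split => //; exact: ltr01|rewrite scale1r].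
  by rewrite (Ssp _ Sk) mulr1.
have Acomp : compact A.
  apply: bounded_closed_compact; last exact: closed_closure.
  exists 2; split; first exact: num_real.
  move=> M hM z Az /=; apply: (le_trans (max_le_en _)).
  have [k Sk hk] := Anear z Az.
  have := en_triangle (z - k) k; rewrite subrK (Ssp _ Sk) => h; lra.
have Areg : forall z, A z ->
    differentiable g z /\ (forall w, {for z, continuous ('D_w g)}).
  move=> z /AKt [t [th [t0 Sth] ->]].
  have [C2a C2b] := nbhs_singleton ((eigt th Sth).1).
  split; first exact: transfer_diff.
  by move=> w; apply: transfer_cont.
have [M0 hM0] := cont_bound Acomp
  (fun z Az => differentiable_continuous (Areg z Az).1).
have [Mf hMf] : exists Mf : 'I_d -> R,
    forall i z, A z -> `|'D_(ebasis R i) g z| <= Mf i.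
  have : forall i : 'I_d, exists M : R,
      forall z, A z -> `|'D_(ebasis R i) g z| <= M.
    by move=> i; apply: cont_bound => // z Az; exact: (Areg z Az).2.
  by move/choice => [Mf hMf]; exists Mf => i z Az; exact: hMf.
set L := \sum_(i < d) Mf i.
have lip : forall z0 z1 : 'rV[R]_d,
    (forall s : R, 0 <= s <= 1 -> A (z0 + s *: (z1 - z0))) ->
    `|g z1 - g z0| <= L * enorm (z1 - z0).
  move=> z0 z1 seg; apply: (lip_seg seg).
    by move=> z Az; exact: (Areg z Az).1.
  by move=> z i Az; exact: hMf.
pose R0 := (8 / eta) `^ a^-1.
have R0pos : 0 < R0 by apply: powR_gt0; rewrite divr_gt0.
have decay : forall r : R, R0 <= r -> r `^ (- a) <= eta / 8.
  move=> r hr.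
  have r0 : 0 < r by apply: lt_le_trans hr.
  have h1 : 8 / eta <= r `^ a.
    have -> : 8 / eta = R0 `^ a.
      rewrite /R0 -powRrM mulVf ?gt_eqF // powRr1 //; apply: ltW; by rewrite divr_gt0.
    by apply: (ge0_ler_powR (ltW a0)) => //; rewrite nnegrE ltW.
  have ra0 : 0 < r `^ a by apply: powR_gt0.
  rewrite powRN -div1r ler_pdivrMr //.
  have : eta / 8 * (8 / eta) = 1 by field; rewrite gt_eqF.
  have : 0 <= eta / 8 by rewrite divr_ge0 // ltW.
  nra.
have Ath0 : A th0 by apply: BA; exists th0 => //; rewrite subrr en0; lra.
have M00 : 0 <= M0 := le_trans (normr_ge0 _) (hM0 _ Ath0).
have L0 : 0 <= L.
  by apply: sumr_ge0 => i _; exact: le_trans (normr_ge0 _) (hMf i _ Ath0).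
have Rp0 : 0 <= R0 `^ p := powR_ge0 _ _.
exists (1 + R0 `^ p * M0 + 2 * L).
move=> x nKx; rewrite /v; case: asboolP => [Gx|_]; last first.
  apply: Cgen; have : 0 <= R0 `^ p * M0 by apply: mulr_ge0.
  lra.
case: Gx => [[k Kk hk] [//|[_ hdist]]].
case: Kk => t [th [t0 Sth] kE].
have enth : enorm th = 1 := Ssp _ Sth.
have enk : enorm k = t by rewrite kE enZ enth mulr1 gtr0_norm.
have x0 : x != 0.
  apply/eqP => x0; move: hk; rewrite x0 sub0r enN enk; nra.
set r := enorm x.
have r0 : 0 < r := en_gt0 x0.
have hxk2 : enorm (x - r *: th) <= 2 * enorm (x - k).
  have -> : x - r *: th = (x - k) + (k - r *: th) by rewrite addrA subrK.
  apply: (le_trans (en_triangle _ _)).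
  have -> : k - r *: th = (t - r) *: th by rewrite kE scalerBl.
  rewrite enZ enth mulr1.
  have := en_sub_le k x; rewrite enk -/r -enN opprB; lra.
have tr : 3 * t < 4 * r.
  have := en_sub_le k x; rewrite enk -/r -enN opprB => h.
  have := ler_norm (t - r); nra.
set th1 := r^-1 *: x.
have thE : th1 - th = r^-1 *: (x - r *: th).
  by rewrite scalerBr scalerA mulVf ?gt_eqF // scale1r.
have hth : enorm (th1 - th) < 8 / 3 * eta.
  rewrite thE enZ gtr0_norm ?invr_gt0 //.
  set X := enorm (x - r *: th) in hxk2 *.
  have e2 : r * (r^-1 * X) = X by field; rewrite gt_eqF.
  set Y := r^-1 * X in e2 *; nra.
have Ath1 : A th1 by apply: BA; exists th => //; lra.
have gth : g th1 = g x by rewrite /g /th1 hom0Z // invr_gt0.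
have ux : u x = r `^ p * g x by [].
rewrite ux normrM ger0_norm ?powR_ge0 //.
have rpa0 : 0 <= r `^ (p - a) := powR_ge0 _ _.
have rp0 : 0 <= r `^ p := powR_ge0 _ _.
case: (ltP r R0) => hr.
  have hrp : r `^ p <= R0 `^ p.
    by apply: (ge0_ler_powR (ltW p0)); rewrite ?nnegrE ?ltW.
  have hgx : `|g x| <= M0 by rewrite -gth; exact: hM0.
  apply: (le_trans (ler_pM rp0 (normr_ge0 _) hrp hgx)).
  have : 0 <= R0 `^ p * M0 by apply: mulr_ge0.
  move=> P0; rewrite mulrDr mulr1.
  have : 0 <= (1 + R0 `^ p * M0 + 2 * L) * r `^ (p - a).
    by apply: mulr_ge0 => //; lra.
  lra.
have hdec := decay r hr.
have rap : 0 < r `^ (- a) := powR_gt0 _ r0.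
have ra : r `^ (1 - a) = r * r `^ (- a).
  rewrite powRD; last by rewrite (gt_eqF r0) implybT.
  by rewrite powRr1 // ltW.
have S0 : [set enorm (x - y) | y in bd (cone Sig)] !=set0.
  by exists (enorm (x - 0)), 0 => //; exact: (bd_cone0 Ssp Sth0).
have hlt : dist_set x (bd (cone Sig)) < 2 * r `^ (1 - a).
  rewrite ra; rewrite ra in hdist; have : 0 < r * r `^ (- a) by apply: mulr_gt0.
  lra.
have [e [y bdy ey] he] := inf_lt S0 hlt.
rewrite -ey ra in he.
have hxy : enorm (x - y) < r * eta / 4 by nra.
have y0 : y != 0.
  apply/eqP => y0; move: hxy; rewrite y0 subr0 -/r; nra.
have sb := bd_nrm So bdy y0.
have gy : g y = 0 := PD.2.2.2.2.1 _ sb.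
set w := r^-1 *: y.
have gw : g w = 0 by rewrite /g /w hom0Z ?invr_gt0.
have twE : th1 - w = r^-1 *: (x - y) by rewrite scalerBr.
have htw : enorm (th1 - w) < 2 * r `^ (- a).
  rewrite twE enZ gtr0_norm ?invr_gt0 //.
  set X := enorm (x - y) in he hxy *.
  have e2 : r * (r^-1 * X) = X by field; rewrite gt_eqF.
  set Y := r^-1 * X in e2 *; nra.
have seg : forall s : R, 0 <= s <= 1 -> A (w + s *: (th1 - w)).
  move=> s /andP[s0 s1]; apply: BA; exists th => //.
  have -> : w + s *: (th1 - w) - th = ((w - th1) + (th1 - th)) + s *: (th1 - w).
    by rewrite addrA subrK addrAC.
  apply: (le_lt_trans (en_triangle _ _)).
  have h1 := en_triangle (w - th1) (th1 - th).
  have h2 : enorm (w - th1) = enorm (th1 - w) by rewrite -enN opprB.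
  rewrite enZ ger0_norm //.
  have : s * enorm (th1 - w) <= enorm (th1 - w).
    by rewrite ler_piMl ?en_ge0.
  lra.
have hl := lip w th1 seg.
rewrite gw subr0 gth in hl.
have prA : r `^ (p - a) = r `^ p * r `^ (- a).
  by rewrite powRD // (gt_eqF r0) implybT.
rewrite prA.
have hg : `|g x| <= L * (2 * r `^ (- a)).
  by apply: (le_trans hl); rewrite ler_wpM2l // ltW.
apply: (@le_trans _ _ (r `^ p * (L * (2 * r `^ (- a))))).
  by rewrite ler_wpM2l.
have : 0 <= r `^ p * r `^ (- a) by apply: mulr_ge0 => //; exact: ltW.
have : 0 <= R0 `^ p * M0 by apply: mulr_ge0.
set q := r `^ p * r `^ (- a).
have -> : r `^ p * (L * (2 * r `^ (- a))) = 2 * L * q by rewrite /q; ring.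
move=> P0 q0; rewrite mulrDr mulr1.
have : 2 * L * q <= (1 + R0 `^ p * M0 + 2 * L) * q.
  by apply: ler_wpM2r => //; lra.
have : 0 <= 1 + R0 `^ p * M0 + 2 * L by lra.
lra.
Qed.
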